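(* Let $R$ be a Noetherian ring, $I\subseteq R$ an ideal, and $J_1=(f_1,\ldots,f_m)\subseteq I$, $J_2=(g_1,\ldots,g_m)\subseteq I$ ideals with $f_i-g_i\in I^2$ for $i=1,\ldots,m$. Assume the pair $J_1\subseteq I$ is Aluffi torsion-free. Let $\mathcal Z_1=\{(a_1,\ldots,a_m)\in R^m:\sum a_if_i=0\}$ and $\mathcal Z_2=\{(a_1,\ldots,a_m)\in R^m:\sum a_ig_i=0\}$. Then $J_2\subseteq I$ is Aluffi torsion-free if and only if $\mathcal Z_1\cap I^nR^m\subseteq \mathcal Z_2+I^{n+1}R^m$ for all $n\ge0$.
   Context: A pair of ideals $J\subseteq I$ in a ring $R$ is called Aluffi torsion-free if $J\cap I^n=JI^{n-1}$ for all $n\ge1$ (with $I^0=R$). *)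

(* Defs.v *)
From HB Require Import structures.
From mathcomp Require Import all_boot all_order all_algebra.
Set Implicit Arguments. Unset Strict Implicit. Unset Printing Implicit Defensive.
Import GRing.Theory.
Local Open Scope ring_scope.

Section Ideals.
Variable R : comNzRingType.

Definition is_ideal (I : R -> Prop) : Prop :=
  [/\ I 0, (forall x y, I x -> I y -> I (x + y)) & (forall r x, I x -> I (r * x))].

Definition gen_ideal (m : nat) (f : 'I_m -> R) : R -> Prop :=
  fun x => exists a : 'I_m -> R, x = \sum_(i < m) a i * f i.

Definition ideal_mul (I J : R -> Prop) : R -> Prop :=
  fun x => exists (n : nat) (a b : 'I_n -> R),
    (forall i, I (a i) /\ J (b i)) /\ x = \sum_(i < n) a i * b i.

Fixpoint ideal_pow (I : R -> Prop) (n : nat) : R -> Prop :=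
  match n with
  | 0%N => fun _ => True
  | n'.+1 => ideal_mul (ideal_pow I n') I
  end.

Definition noetherian : Prop :=
  forall I : R -> Prop, is_ideal I ->
    exists (m : nat) (f : 'I_m -> R), forall x, I x <-> gen_ideal f x.

Definition aluffi_torsion_free (J I : R -> Prop) : Prop :=
  forall n : nat, (1 <= n)%N ->
    forall x, (J x /\ ideal_pow I n x) <-> ideal_mul J (ideal_pow I n.-1) x.

Definition syzygy (m : nat) (f : 'I_m -> R) (a : 'I_m -> R) : Prop :=
  \sum_(i < m) a i * f i = 0.

End Ideals.

(* Main.v *)
Require Import Defs.
From HB Require Import structures.
From mathcomp Require Import all_boot all_order all_algebra.
From mathcomp Require Import ring zify.
Set Implicit Arguments. Unset Strict Implicit.
Import GRing.Theory.
Local Open Scope ring_scope.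

Section Helpers.
Variable R : comNzRingType.

Lemma ideal_sum (K : R -> Prop) (n : nat) (F : 'I_n -> R) :
  is_ideal K -> (forall i, K (F i)) -> K (\sum_(i < n) F i).
Proof.
case=> K0 KD KM HF; apply: (big_ind K) => //; by move=> i _; apply: HF.
Qed.

Lemma ideal_opp (K : R -> Prop) x : is_ideal K -> K x -> K (- x).
Proof. by case=> _ _ KM Kx; rewrite -mulN1r; apply: KM. Qed.

Lemma ideal_sub (K : R -> Prop) x y : is_ideal K -> K x -> K y -> K (x - y).
Proof. move=> HK Kx Ky; case: (HK) => _ KD _; apply: KD => //; exact: ideal_opp. Qed.

Lemma ideal_mul_ideal (J K : R -> Prop) : is_ideal K -> is_ideal (ideal_mul J K).
Proof.
case=> K0 KD KM; split.
- exists 0%N, (fun _ => 0), (fun _ => 0); split; first by case.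
  by rewrite big_ord0.
- move=> x y [n1 [a1 [b1 [H1 ->]]]] [n2 [a2 [b2 [H2 ->]]]].
  exists (n1 + n2)%N,
    (fun i => match split i with inl j => a1 j | inr j => a2 j end),
    (fun i => match split i with inl j => b1 j | inr j => b2 j end).
  split.
  + by move=> i; case: (split i) => j.
  + rewrite big_split_ord /=; congr (_ + _); apply: eq_bigr => i _.
    * by rewrite (unsplitK (inl i)).
    * by rewrite (unsplitK (inr i)).
- move=> r x [n [a [b [H ->]]]].
  exists n, a, (fun i => r * b i); split.
  + by move=> i; case: (H i) => Ha Hb; split => //; apply: KM.
  + rewrite big_distrr; apply: eq_bigr => i _ /=; ring.
Qed.

Variable I : R -> Prop.
Hypothesis HI : is_ideal I.

Lemma pow_ideal n : is_ideal (ideal_pow I n).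
Proof. case: n => [|n] /=; last exact: ideal_mul_ideal. by split. Qed.

Lemma pow_mul k j x y : ideal_pow I k x -> ideal_pow I j y ->
  ideal_pow I (k + j) (x * y).
Proof.
elim: j y => [|j IH] y Hx Hy.
  rewrite addn0 mulrC; case: (pow_ideal k) => _ _ KM; exact: KM.
rewrite addnS /=; move: Hy => [N [c [d [H ->]]]].
exists N, (fun l => x * c l), d; split.
  by move=> l; case: (H l) => Hc Hd; split => //; apply: IH.
rewrite big_distrr; apply: eq_bigr => i _ /=; ring.
Qed.

Lemma pow_S k x : ideal_pow I k.+1 x -> ideal_pow I k x.
Proof.
move=> [N [a [b [H ->]]]]; apply: ideal_sum; first exact: pow_ideal.
move=> i; case: (H i) => Ha _; rewrite mulrC.
case: (pow_ideal k) => _ _ KM; exact: KM.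
Qed.

Lemma pow_le j k x : (j <= k)%N -> ideal_pow I k x -> ideal_pow I j x.
Proof.
elim: k => [|k IH]; first by rewrite leqn0 => /eqP ->.
rewrite leq_eqVlt => /orP[/eqP -> //|]; rewrite ltnS => Hjk Hx.
by apply: IH => //; apply: pow_S.
Qed.

Lemma pow1 y : I y -> ideal_pow I 1 y.
Proof.
move=> Hy; exists 1%N, (fun _ => 1), (fun _ => y); split => //.
by rewrite big_ord1 mul1r.
Qed.

Lemma gen_self m (g : 'I_m -> R) i : gen_ideal g (g i).
Proof.
exists (fun j => (j == i)%:R).
rewrite (bigD1 i) //= eqxx mul1r big1 ?addr0 //.
by move=> j /negbTE ->; rewrite mul0r.
Qed.

Lemma mul_gen (K : R -> Prop) m (g : 'I_m -> R) x : is_ideal K ->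
  (ideal_mul (gen_ideal g) K x <->
   exists b : 'I_m -> R, (forall i, K (b i)) /\ x = \sum_(i < m) b i * g i).
Proof.
move=> HK; split.
- move=> [N [u [v [H ->]]]].
  have [c Hc] : exists c : 'I_N -> ('I_m -> R),
      forall l, u l = \sum_(i < m) c l i * g i.
    apply: (@fin_all_exists _ (fun _ => 'I_m -> R)
      (fun l (w : 'I_m -> R) => u l = \sum_(i < m) w i * g i)) => l.
    by case: (H l) => [[w Hw] _]; exists w.
  exists (fun i => \sum_(l < N) c l i * v l); split.
    move=> i; apply: ideal_sum => // l; case: (H l) => _ Hv.
    case: HK => _ _ KM; exact: KM.
  under [RHS]eq_bigr do rewrite big_distrl.
  rewrite exchange_big /=; apply: eq_bigr => l _.
  rewrite Hc big_distrl; apply: eq_bigr => i _ /=; ring.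
- move=> [b [Hb ->]]; exists m, g, b; split.
    by move=> i; split => //; apply: gen_self.
  by apply: eq_bigr => i _; rewrite mulrC.
Qed.

Lemma sum_subl m (a b g : 'I_m -> R) :
  \sum_(i < m) (a i - b i) * g i = \sum_(i < m) a i * g i - \sum_(i < m) b i * g i.
Proof. rewrite -sumrB; apply: eq_bigr => i _; by rewrite mulrBl. Qed.

Lemma sum_subr m (a f g : 'I_m -> R) :
  \sum_(i < m) a i * (f i - g i) = \sum_(i < m) a i * f i - \sum_(i < m) a i * g i.
Proof. rewrite -sumrB; apply: eq_bigr => i _; by rewrite mulrBr. Qed.

End Helpers.

Theorem theorem2p7 (R : comNzRingType) (m : nat) (I : R -> Prop)
    (f g : 'I_m -> R) :
  noetherian R ->
  is_ideal I ->
  (forall x, gen_ideal f x -> I x) ->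
  (forall x, gen_ideal g x -> I x) ->
  (forall i, ideal_pow I 2 (f i - g i)) ->
  aluffi_torsion_free (gen_ideal f) I ->
  (aluffi_torsion_free (gen_ideal g) I <->
   forall n : nat, forall a : 'I_m -> R,
     syzygy f a -> (forall i, ideal_pow I n (a i)) ->
     exists z : 'I_m -> R,
       syzygy g z /\ forall i, ideal_pow I n.+1 (a i - z i)).
Proof.
move=> _ HI Hf Hg Hfg Htf; split.
- move=> Htg n a Hsyz Ha.
  set x := \sum_(i < m) a i * g i.
  have Hx : ideal_pow I n.+2 x.
    have -> : x = \sum_(i < m) a i * (g i - f i).
      by rewrite sum_subr; move: Hsyz; rewrite /syzygy => ->; rewrite subr0.
    apply: (ideal_sum (pow_ideal HI n.+2)).
    move=> i; rewrite -addn2; apply: (pow_mul HI) => //.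
    have -> : g i - f i = - (f i - g i) by ring.
    apply: (ideal_opp (pow_ideal HI 2)); exact: Hfg.
  have := (proj1 (Htg n.+2 isT x) (conj (ex_intro _ a erefl) Hx)).
  move=> /(@mul_gen _ _ _ _ _ (pow_ideal HI n.+1)) [b [Hb Hxb]].
  exists (fun i => a i - b i); split.
    by rewrite /syzygy sum_subl -/x -Hxb subrr.
  move=> i; have -> : a i - (a i - b i) = b i by ring.
  exact: Hb.
- move=> Hsyz n Hn x; split.
  + move=> [Hgx Hnx].
    have key : forall k, (k <= n.-1)%N -> exists a : 'I_m -> R,
        (forall i, ideal_pow I k (a i)) /\ x = \sum_(i < m) a i * g i.
      elim=> [|k IH] Hk.
        by case: Hgx => a ->; exists a.
      have [a [Ha Hxa]] := IH (ltnW Hk).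
      set y := \sum_(i < m) a i * f i.
      have Hy : ideal_pow I k.+2 y.
        have -> : y = x + \sum_(i < m) a i * (f i - g i).
          by rewrite sum_subr Hxa /y; ring.
        case: (pow_ideal HI k.+2) => _ KD _; apply: KD.
          by apply: (pow_le HI) Hnx; lia.
        apply: (ideal_sum (pow_ideal HI k.+2)).
        move=> i; rewrite -addn2; exact: (pow_mul HI).
      have := (proj1 (Htf k.+2 isT y) (conj (ex_intro _ a erefl) Hy)).
      move=> /(@mul_gen _ _ _ _ _ (pow_ideal HI k.+1)) [b [Hb Hyb]].
      have Hd : syzygy f (fun i => a i - b i).
        by rewrite /syzygy sum_subl -/y -Hyb subrr.
      have Hdk : forall i, ideal_pow I k (a i - b i).
        move=> i; apply: (ideal_sub (pow_ideal HI k)); first exact: Ha.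
        exact: (pow_S HI).
      have [z [Hz Hdz]] := Hsyz k _ Hd Hdk.
      exists (fun i => a i - z i); split.
        move=> i; have -> : a i - z i = b i + ((a i - b i) - z i) by ring.
        case: (pow_ideal HI k.+1) => _ KD _; apply: KD; [exact: Hb | exact: Hdz].
      by rewrite sum_subl -Hxa; move: Hz; rewrite /syzygy => ->; rewrite subr0.
    have [a [Ha Hxa]] := key n.-1 (leqnn _).
    by apply/(@mul_gen _ _ _ _ _ (pow_ideal HI n.-1)); exists a.
  + move=> /(@mul_gen _ _ _ _ _ (pow_ideal HI n.-1)) [b [Hb ->]]; split.
      by exists b.
    apply: (ideal_sum (pow_ideal HI n)).
    move=> i; rewrite -(prednK Hn) -addn1; apply: (pow_mul HI) => //.
    by apply: pow1; apply: Hg; apply: gen_self.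
Qed.
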